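(* Let $d=2$, $r>\frac32$, $\beta>0$, let $\eta$ be a complex-valued mean-zero function on $\Omega=[0,2\pi]^2$ with $\|\Lambda^{1/2}\eta\|_\beta<\infty$, and let $\mathbf u=(-R_2\eta,R_1\eta)$. Then $$|\langle \mathbf u\cdot\nabla\eta,\ \Lambda^{2r}e^{2\beta\Lambda}\eta\rangle|\le C\,2^rC_W(r)\,\|\eta\|_\beta\,\|\Lambda^{1/2}\eta\|_\beta^2,$$ with $C>0$ an absolute constant.
   Context: Periodic functions on $\Omega=[0,2\pi]^2$ with zero mean; $\langle\cdot,\cdot\rangle$ is the complex $L^2$ inner product. $\Lambda=(-\Delta)^{1/2}$ acts on Fourier coefficients by multiplication by $|\mathbf k|$; $R_j=\partial_j\Lambda^{-1}$ are the Riesz transforms (multiplier $ik_j/|\mathbf k|$). $\|\eta\|_\beta=\|\Lambda^re^{\beta\Lambda}\eta\|$, i.e. $\|\eta\|_\beta^2=(2\pi)^2\sum_{\mathbf k\ne0}|\mathbf k|^{2r}e^{2\beta|\mathbf k|}|\hat\eta(\mathbf k)|^2$. $C_W(r)=\frac{1}{2\pi}\frac{2r-2}{2r-3}$ (the general formula $\frac{1}{\pi2^{d-1}}\frac{2r-d}{2r-1-d}$ with $d=2$). *)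

(* Defs.v *)
From Stdlib Require Import Reals Lra ZArith List.
Open Scope R_scope.

Definition Cx : Type := (R * R)%type.
Definition Cmul (z w : Cx) : Cx :=
  (fst z * fst w - snd z * snd w, fst z * snd w + snd z * fst w).
Definition Cconj (z : Cx) : Cx := (fst z, - snd z).
Definition Cscal (a : R) (z : Cx) : Cx := (a * fst z, a * snd z).
Definition Cmod (z : Cx) : R := sqrt (fst z ^ 2 + snd z ^ 2).
Definition Cnorm2 (z : Cx) : R := fst z ^ 2 + snd z ^ 2.

Definition Z2 : Type := (Z * Z)%type.
Definition Z2add (j l : Z2) : Z2 := (fst j + fst l, snd j + snd l)%Z.
Definition knorm (k : Z2) : R := sqrt (IZR (fst k) ^ 2 + IZR (snd k) ^ 2).

(* Unconditional (= absolute, for real/complex series) summation over an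
   arbitrary index type: the net of finite partial sums converges to S. *)
Definition has_sum {T : Type} (f : T -> R) (S : R) : Prop :=
  forall eps, 0 < eps -> exists F0 : list T,
    forall F : list T, NoDup F -> incl F0 F ->
      Rabs (fold_right Rplus 0 (map f F) - S) < eps.

Definition has_sumC {T : Type} (f : T -> Cx) (S : Cx) : Prop :=
  has_sum (fun t => fst (f t)) (fst S) /\ has_sum (fun t => snd (f t)) (snd S).

(* A function eta on [0,2pi]^2 is represented by its Fourier coefficients
   eh : Z2 -> Cx, eta(x) = sum_k eh k e^{i k.x}. *)

Definition gweight (s beta : R) (k : Z2) : R :=
  Rpower (knorm k) (2 * s) * exp (2 * beta * knorm k).

(* Summand of ||Lambda^a eta||_beta^2 / (2pi)^2 for the norm with exponent r:
   |k|^{2(r+a)} e^{2 beta |k|} |eh k|^2 *)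
Definition norm_term (r a beta : R) (eh : Z2 -> Cx) (k : Z2) : R :=
  gweight (r + a) beta k * Cnorm2 (eh k).

(* With u = (-R_2 eta, R_1 eta), the Fourier coefficient of u . grad eta at k is
   sum_{j+l=k} (u^(j) . (i l)) eh l, where
   u^(j) = (-(i j_2/|j|) eh j, (i j_1/|j|) eh j), so that
   u^(j) . (i l) = (j_2 l_1 - j_1 l_2)/|j| * eh j.
   The inner product <u.grad eta, Lambda^{2r} e^{2 beta Lambda} eta>
   = (2pi)^2 sum_k (u.grad eta)^(k) * conj(|k|^{2r} e^{2beta|k|} eh k),
   written as a double sum over pairs (j,l). *)
Definition ip_term (r beta : R) (eh : Z2 -> Cx) (p : Z2 * Z2) : Cx :=
  let j := fst p in let l := snd p in let k := Z2add j l in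
  Cscal ((2 * PI) ^ 2 *
         ((IZR (snd j) * IZR (fst l) - IZR (fst j) * IZR (snd l)) / knorm j)
         * gweight r beta k)
        (Cmul (Cmul (eh j) (eh l)) (Cconj (eh k))).

Definition CW (r : R) : R := / (2 * PI) * ((2 * r - 2) / (2 * r - 3)).

(* Main.v *)
Require Import Defs.
From Stdlib Require Import Reals Lra Lia Psatz ZArith List Classical.
Open Scope R_scope.

Definition lsum {T : Type} (f : T -> R) (F : list T) : R := fold_right Rplus 0 (map f F).

Lemma lsum_nil {T} (f : T -> R) : lsum f nil = 0.
Proof. reflexivity. Qed.
Lemma lsum_cons {T} (f : T -> R) a F : lsum f (a :: F) = f a + lsum f F.
Proof. reflexivity. Qed.
Lemma lsum_app {T} (f : T -> R) F G : lsum f (F ++ G) = lsum f F + lsum f G.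
Proof. induction F; simpl; unfold lsum in *; simpl; [ring| rewrite IHF; ring]. Qed.
Lemma lsum_map {T U} (f : U -> R) (g : T -> U) F : lsum f (map g F) = lsum (fun x => f (g x)) F.
Proof. unfold lsum; rewrite map_map; reflexivity. Qed.
Lemma lsum_lin {T} (f g : T -> R) a b F :
  lsum (fun x => a * f x + b * g x) F = a * lsum f F + b * lsum g F.
Proof. induction F; rewrite ?lsum_cons, ?lsum_nil; [ring|rewrite IHF; ring]. Qed.
Lemma lsum_sub {T} (f g : T -> R) F :
  lsum (fun x => f x - g x) F = lsum f F - lsum g F.
Proof. induction F; rewrite ?lsum_cons, ?lsum_nil; [ring|rewrite IHF; ring]. Qed.
Lemma lsum_le {T} (f g : T -> R) F : (forall x, f x <= g x) -> lsum f F <= lsum g F.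
Proof. intro H; induction F; rewrite ?lsum_cons, ?lsum_nil; [lra| specialize (H a); lra]. Qed.
Lemma lsum_nonneg {T} (f : T -> R) F : (forall x, 0 <= f x) -> 0 <= lsum f F.
Proof. intro H; induction F; rewrite ?lsum_cons, ?lsum_nil; [lra| specialize (H a); lra]. Qed.
Lemma lsum_scal {T} (f : T -> R) a F : lsum (fun x => a * f x) F = a * lsum f F.
Proof. induction F; rewrite ?lsum_cons, ?lsum_nil; [ring|rewrite IHF; ring]. Qed.

Lemma lsum_incl {T} (f : T -> R) : (forall x, 0 <= f x) ->
  forall F G, NoDup F -> incl F G -> lsum f F <= lsum f G.
Proof.
  intros Hf F; induction F as [|a F IH]; intros G HN HI.
  - rewrite lsum_nil; apply lsum_nonneg; auto.
  - inversion HN; subst.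
    assert (Ha : In a G) by (apply HI; left; auto).
    destruct (in_split _ _ Ha) as [G1 [G2 ->]].
    rewrite lsum_cons, lsum_app, lsum_cons.
    assert (lsum f F <= lsum f (G1 ++ G2)).
    { apply IH; auto. intros x Hx. assert (In x (G1 ++ a :: G2)) by (apply HI; right; auto).
      apply in_app_or in H. apply in_or_app. destruct H as [H|H]; auto.
      destruct H as [H|H]; auto. subst; contradiction. }
    rewrite lsum_app in H. lra.
Qed.

Lemma lsum_prod {U V} (f : U -> R) (g : V -> R) L1 L2 :
  lsum (fun p => f (fst p) * g (snd p)) (list_prod L1 L2) = lsum f L1 * lsum g L2.
Proof.
  induction L1 as [|a L1 IH]. - rewrite lsum_nil. unfold lsum; simpl; ring.
  - change (list_prod (a :: L1) L2) with (map (fun y => (a, y)) L2 ++ list_prod L1 L2).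
    rewrite lsum_app, IH, lsum_cons, lsum_map. cbn [fst snd]. rewrite lsum_scal. ring.
Qed.

Definition SB {T} (f : T -> R) (M : R) := forall F, NoDup F -> lsum f F <= M.

Lemma SB_le {T} (f g : T -> R) M : (forall x, f x <= g x) -> SB g M -> SB f M.
Proof. intros H HS F HF. eapply Rle_trans; [apply lsum_le; eauto| auto]. Qed.

Lemma SB_lin {T} (f g : T -> R) a b M1 M2 : 0 <= a -> 0 <= b -> SB f M1 -> SB g M2 ->
  SB (fun x => a * f x + b * g x) (a * M1 + b * M2).
Proof. intros Ha Hb H1 H2 F HF. rewrite lsum_lin. specialize (H1 F HF); specialize (H2 F HF). nra. Qed.

Lemma SB_scal {T} (f : T -> R) a M : 0 <= a -> SB f M -> SB (fun x => a * f x) (a * M).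
Proof. intros Ha H1 F HF. rewrite lsum_scal. specialize (H1 F HF). nra. Qed.

Lemma SB_prod {T U V} (decU : forall x y : U, {x = y} + {x <> y})
  (decV : forall x y : V, {x = y} + {x <> y}) (f : U -> R) (g : V -> R) (phi : T -> U * V) M1 M2 :
  (forall x, 0 <= f x) -> (forall x, 0 <= g x) ->
  (forall x y, phi x = phi y -> x = y) -> SB f M1 -> SB g M2 ->
  SB (fun x => f (fst (phi x)) * g (snd (phi x))) (M1 * M2).
Proof.
  intros Hf Hg Hphi H1 H2 F HF.
  rewrite <- (lsum_map (fun p => f (fst p) * g (snd p)) phi).
  set (L1 := nodup decU (map fst (map phi F))).
  set (L2 := nodup decV (map snd (map phi F))).
  apply Rle_trans with (lsum (fun p => f (fst p) * g (snd p)) (list_prod L1 L2)).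
  - apply lsum_incl.
    + intros; apply Rmult_le_pos; auto.
    + apply NoDup_map_NoDup_ForallPairs; auto. intros x y _ _; auto.
    + intros [u v] Hp. apply in_prod; unfold L1, L2; apply nodup_In.
      * change u with (fst (u, v)); apply in_map; auto.
      * change v with (snd (u, v)); apply in_map; auto.
  - rewrite lsum_prod.
    assert (0 <= lsum f L1) by (apply lsum_nonneg; auto).
    assert (0 <= lsum g L2) by (apply lsum_nonneg; auto).
    assert (lsum f L1 <= M1) by (apply H1; apply NoDup_nodup).
    assert (lsum g L2 <= M2) by (apply H2; apply NoDup_nodup).
    nra.
Qed.

Lemma has_sum_SB {T} (dec : forall x y : T, {x = y} + {x <> y}) (f : T -> R) N :
  (forall x, 0 <= f x) -> has_sum f N -> SB f N.
Proof.
  intros Hf HS F HF. destruct (Rle_or_lt (lsum f F) N) as [|Hlt]; auto.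
  exfalso. destruct (HS (lsum f F - N)) as [F0 H0]; [lra|].
  set (G := nodup dec (F ++ F0)).
  assert (HG : NoDup G) by apply NoDup_nodup.
  assert (HI0 : incl F0 G) by (intros x Hx; apply nodup_In; apply in_or_app; auto).
  assert (HIF : incl F G) by (intros x Hx; apply nodup_In; apply in_or_app; auto).
  specialize (H0 G HG HI0). assert (lsum f F <= lsum f G) by (apply lsum_incl; auto).
  unfold lsum in *. apply Rabs_def2 in H0. lra.
Qed.

Lemma exists_sum_nonneg {T} (f : T -> R) M :
  (forall x, 0 <= f x) -> SB f M -> exists S, has_sum f S /\ SB f S /\ 0 <= S /\ S <= M.
Proof.
  intros Hf HM.
  set (E := fun x => exists F, NoDup F /\ x = lsum f F).
  destruct (completeness E) as [S [Hub Hlub]].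
  - exists M. intros x [F [HF ->]]. apply HM; auto.
  - exists 0. exists nil. split; [constructor| reflexivity].
  - assert (HSB : SB f S) by (intros F HF; apply Hub; exists F; auto).
    assert (H0 : 0 <= S) by (apply Hub; exists nil; split; [constructor|reflexivity]).
    exists S; split; [|split; [auto|split; [auto|]]].
    + intros eps Heps.
      destruct (classic (exists F0, NoDup F0 /\ S - eps < lsum f F0)) as [[F0 [HN0 HF0]]|Hno].
      * exists F0. intros F HF HI. assert (lsum f F0 <= lsum f F) by (apply lsum_incl; auto).
        specialize (HSB F HF). unfold lsum in *. apply Rabs_def1; lra.
      * exfalso. assert (S <= S - eps); [|lra]. apply Hlub. intros x [F [HF ->]].
        destruct (Rle_or_lt (lsum f F) (S - eps)); auto. exfalso; apply Hno; eauto.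
    + apply Hlub. intros x [F [HF ->]]; apply HM; auto.
Qed.

Lemma has_sum_sub {T} (f g : T -> R) a b : has_sum f a -> has_sum g b ->
  has_sum (fun x => f x - g x) (a - b).
Proof.
  intros Ha Hb eps He. destruct (Ha (eps/2)) as [F1 H1]; [lra|].
  destruct (Hb (eps/2)) as [F2 H2]; [lra|]. exists (F1 ++ F2). intros F HF HI.
  assert (incl F1 F) by (intros x Hx; apply HI; apply in_or_app; auto).
  assert (incl F2 F) by (intros x Hx; apply HI; apply in_or_app; auto).
  specialize (H1 F HF H); specialize (H2 F HF H0).
  change (fold_right Rplus 0 (map (fun x => f x - g x) F)) with (lsum (fun x => f x - g x) F).
  rewrite lsum_sub. unfold lsum. apply Rabs_def2 in H1; apply Rabs_def2 in H2. apply Rabs_def1; lra.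
Qed.

Lemma has_sum_ext {T} (f g : T -> R) a : (forall x, f x = g x) -> has_sum f a -> has_sum g a.
Proof.
  intros He H eps Heps. destruct (H eps Heps) as [F0 H0]. exists F0. intros F HF HI.
  specialize (H0 F HF HI). replace (map g F) with (map f F); auto. apply map_ext; auto.
Qed.

Lemma exists_sum_abs {T} (f Tb : T -> R) M :
  (forall x, Rabs (f x) <= Tb x) -> SB Tb M -> exists S, has_sum f S /\ Rabs S <= M.
Proof.
  intros Hb HM.
  destruct (exists_sum_nonneg (fun x => Rmax (f x) 0) M) as [Sp [Hp [_ [Hp0 HpM]]]].
  { intros; apply Rmax_r. }
  { apply SB_le with Tb; auto. intros x. specialize (Hb x). apply Rmax_lub; [|pose proof (Rabs_pos (f x)); lra].
    pose proof (Rle_abs (f x)); lra. }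
  destruct (exists_sum_nonneg (fun x => Rmax (- f x) 0) M) as [Sm [Hm [_ [Hm0 HmM]]]].
  { intros; apply Rmax_r. }
  { apply SB_le with Tb; auto. intros x. specialize (Hb x). apply Rmax_lub; [|pose proof (Rabs_pos (f x)); lra].
    pose proof (Rle_abs (- f x)); rewrite Rabs_Ropp in H; lra. }
  exists (Sp - Sm). split.
  - eapply has_sum_ext; [|apply has_sum_sub; [exact Hp|exact Hm]].
    intros x; simpl. unfold Rmax. destruct (Rle_dec (f x) 0); destruct (Rle_dec (- f x) 0); lra.
  - apply Rabs_le; lra.
Qed.

Lemma Rdiv_le_0_compat a b : 0 <= a -> 0 < b -> 0 <= a / b.
Proof. intros; unfold Rdiv; apply Rmult_le_pos; [lra| left; apply Rinv_0_lt_compat; lra]. Qed.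

Lemma lsum_ext {T} (f g : T -> R) F : (forall x, f x = g x) -> lsum f F = lsum g F.
Proof. intros H; unfold lsum; f_equal; apply map_ext; auto. Qed.

Lemma inf_lemma A B c X : 0 <= A -> 0 <= B -> 0 <= c ->
  (forall t, 0 < t -> X <= c * ((t * A + B / t) / 2)) -> X <= c * sqrt (A * B).
Proof.
  intros HA HB Hc H.
  assert (Hs : 0 <= sqrt (A * B)) by apply sqrt_pos.
  destruct (Rle_or_lt X 0) as [HX|HX]; [nra|].
  destruct (Req_dec c 0) as [->|Hc0].
  { specialize (H 1 Rlt_0_1). lra. }
  assert (Hcp : 0 < c) by lra.
  destruct (Req_dec A 0) as [->|HA0].
  { exfalso. set (Y := X / c). assert (HY : 0 < Y) by (unfold Y; apply Rdiv_lt_0_compat; lra).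
    specialize (H (B / Y + 1)).
    assert (Ht : 0 < B / Y + 1) by (assert (0 <= B / Y) by (apply Rdiv_le_0_compat; lra); lra).
    specialize (H Ht). assert (X = c * Y) by (unfold Y; field; lra).
    assert (B / (B / Y + 1) < 2 * Y).
    { apply Rmult_lt_reg_r with (B / Y + 1); auto. unfold Rdiv. rewrite Rmult_assoc, Rinv_l by lra.
      replace (2 * Y * (B * / Y + 1)) with (2 * B + 2 * Y) by (field; lra). lra. }
    nra. }
  destruct (Req_dec B 0) as [->|HB0].
  { exfalso. set (Y := X / c). assert (HY : 0 < Y) by (unfold Y; apply Rdiv_lt_0_compat; lra).
    specialize (H (Y / (A + 1))).
    assert (Ht : 0 < Y / (A + 1)) by (apply Rdiv_lt_0_compat; lra).
    specialize (H Ht). assert (X = c * Y) by (unfold Y; field; lra).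
    assert (Y / (A + 1) * A < 2 * Y).
    { unfold Rdiv. apply Rmult_lt_reg_r with (A + 1); [lra|].
      replace (Y * / (A + 1) * A * (A + 1)) with (Y * A) by (field; lra). nra. }
    replace (0 / (Y / (A + 1))) with 0 in H by (field; lra). nra. }
  assert (HAp : 0 < A) by lra. assert (HBp : 0 < B) by lra.
  assert (sA : 0 < sqrt A) by (apply sqrt_lt_R0; lra).
  assert (sB : 0 < sqrt B) by (apply sqrt_lt_R0; lra).
  specialize (H (sqrt B / sqrt A) (Rdiv_lt_0_compat _ _ sB sA)).
  rewrite sqrt_mult by lra.
  replace ((sqrt B / sqrt A * A + B / (sqrt B / sqrt A)) / 2) with (sqrt A * sqrt B) in H; auto.
  assert (EA : A = sqrt A * sqrt A) by (rewrite sqrt_sqrt; lra).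
  assert (EB : B = sqrt B * sqrt B) by (rewrite sqrt_sqrt; lra).
  set (a := sqrt A) in *. set (b := sqrt B) in *. rewrite EA at 1. rewrite EB at 1. field; lra.
Qed.

Definition G (a : Z) : R := / ((1 + Rabs (IZR a)) * sqrt (1 + Rabs (IZR a))).

Lemma G_pos a : 0 < G a.
Proof. unfold G. pose proof (Rabs_pos (IZR a)). apply Rinv_0_lt_compat.
  apply Rmult_lt_0_compat; [lra| apply sqrt_lt_R0; lra]. Qed.

Lemma G_nat n : G (Z.of_nat n) = / ((1 + INR n) * sqrt (1 + INR n)).
Proof. unfold G. rewrite <- INR_IZR_INZ. rewrite Rabs_right; auto. apply Rle_ge, pos_INR. Qed.

Lemma G_opp a : G (- a) = G a.
Proof. unfold G. rewrite opp_IZR, Rabs_Ropp. auto. Qed.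

Lemma tele x : 2 <= x -> / (x * sqrt x) <= 2 / sqrt (x - 1) - 2 / sqrt x.
Proof.
  intros Hx. set (s := sqrt x). set (t := sqrt (x - 1)).
  assert (Hs : 0 < s) by (apply sqrt_lt_R0; lra). assert (Ht : 0 < t) by (apply sqrt_lt_R0; lra).
  assert (Hs2 : s * s = x) by (apply sqrt_sqrt; lra). assert (Ht2 : t * t = x - 1) by (apply sqrt_sqrt; lra).
  assert (Hts : t <= s) by (apply sqrt_le_1_alt; lra).
  replace (x * s) with (s * s * s) by (rewrite Hs2; ring).
  assert (Hk : 0 <= 2 * s * s * s - 2 * s * s * t - t).
  { assert (HP : (s - t) * (s + t) = 1) by nra.
    assert (E2 : 2*s*s*s - 2*s*s*t - t = (s - t) * (2*s*s - t*s - t*t) + t*((s-t)*(s+t) - 1)) by ring.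
    rewrite E2, HP. replace (t * (1 - 1)) with 0 by ring. rewrite Rplus_0_r. apply Rmult_le_pos; nra. }
  assert (E : 2 / t - 2 / s - / (s * s * s) = (2 * s * s * s - 2 * s * s * t - t) / (s * s * s * t)) by (field; lra).
  assert (0 <= (2 * s * s * s - 2 * s * s * t - t) / (s * s * s * t)).
  { apply Rdiv_le_0_compat; auto. repeat apply Rmult_lt_0_compat; lra. }
  lra.
Qed.

Lemma sum_seq M : lsum (fun n => / ((1 + INR n) * sqrt (1 + INR n))) (seq 0 (S M)) <= 3 - 2 / sqrt (INR M + 1).
Proof.
  induction M.
  - unfold lsum; simpl. replace (1 + 0) with 1 by ring. rewrite sqrt_1. replace (0+1) with 1 by ring. rewrite sqrt_1. lra.
  - rewrite seq_S, lsum_app. replace (0 + S M)%nat with (S M) by lia.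
    rewrite lsum_cons, lsum_nil. rewrite S_INR.
    pose proof (tele (INR M + 1 + 1)). pose proof (pos_INR M).
    replace (INR M + 1 + 1 - 1) with (INR M + 1) in H by ring.
    replace (1 + (INR M + 1)) with (INR M + 1 + 1) by ring. lra.
Qed.

Lemma sum_seq3 M : lsum (fun n => / ((1 + INR n) * sqrt (1 + INR n))) (seq 0 (S M)) <= 3.
Proof. pose proof (sum_seq M). assert (0 <= 2 / sqrt (INR M + 1)).
  { apply Rdiv_le_0_compat; [lra| apply sqrt_lt_R0; pose proof (pos_INR M); lra]. } lra. Qed.

Lemma list_Z_bound (L : list Z) : exists M, forall a, In a L -> (Z.abs_nat a <= M)%nat.
Proof.
  induction L as [|b L [M HM]]. - exists 0%nat; intros a [].
  - exists (Nat.max M (Z.abs_nat b)). intros a [->|Ha]; [lia|]. specialize (HM a Ha); lia.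
Qed.

Lemma SB_G : SB G 6.
Proof.
  intros L HL. destruct (list_Z_bound L) as [M HM].
  set (Lr := map Z.of_nat (seq 0 (S M)) ++ map (fun n => Z.opp (Z.of_nat n)) (seq 0 (S M))).
  apply Rle_trans with (lsum G Lr).
  - apply lsum_incl; auto. intros; left; apply G_pos.
    intros a Ha. specialize (HM a Ha). unfold Lr. apply in_or_app.
    destruct (Z_le_gt_dec 0 a).
    + left. replace a with (Z.of_nat (Z.abs_nat a)) by lia. apply in_map. apply in_seq. lia.
    + right. replace a with (- Z.of_nat (Z.abs_nat a))%Z by lia.
      apply (in_map (fun n => (- Z.of_nat n)%Z)). apply in_seq. lia.
  - unfold Lr. rewrite lsum_app, !lsum_map.
    rewrite (lsum_ext (fun x => G (- Z.of_nat x)) (fun n => / ((1 + INR n) * sqrt (1 + INR n)))).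
    rewrite (lsum_ext (fun x => G (Z.of_nat x)) (fun n => / ((1 + INR n) * sqrt (1 + INR n)))).
    pose proof (sum_seq3 M). lra.
    intros; apply G_nat. intros; rewrite G_opp; apply G_nat.
Qed.

Lemma abs_le_sqrt x Y : x * x <= Y -> Rabs x <= sqrt Y.
Proof. intros H. rewrite <- sqrt_Rsqr_abs. apply sqrt_le_1_alt. unfold Rsqr; lra. Qed.

Lemma Cmod_mul z w : Cmod (Cmul z w) = Cmod z * Cmod w.
Proof.
  destruct z as [a b], w as [c d]; unfold Cmod, Cmul; simpl.
  rewrite <- sqrt_mult by nra. f_equal; ring.
Qed.
Lemma Cmod_conj z : Cmod (Cconj z) = Cmod z.
Proof. destruct z; unfold Cmod, Cconj; simpl; f_equal; ring. Qed.
Lemma Cmod_pos z : 0 <= Cmod z.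
Proof. apply sqrt_pos. Qed.
Lemma fst_le_Cmod z : Rabs (fst z) <= Cmod z.
Proof. destruct z as [a b]; unfold Cmod; simpl. apply abs_le_sqrt; nra. Qed.
Lemma snd_le_Cmod z : Rabs (snd z) <= Cmod z.
Proof. destruct z as [a b]; unfold Cmod; simpl. apply abs_le_sqrt; nra. Qed.
Lemma Cmod_sq z : Cmod z * Cmod z = Cnorm2 z.
Proof. unfold Cmod, Cnorm2. apply sqrt_sqrt. nra. Qed.

Lemma knorm_pos k : 0 <= knorm k.
Proof. apply sqrt_pos. Qed.

Lemma knorm_sq k : knorm k * knorm k = IZR (fst k) ^ 2 + IZR (snd k) ^ 2.
Proof. unfold knorm. apply sqrt_sqrt. nra. Qed.

Lemma knorm_ge1 k : k <> (0%Z, 0%Z) -> 1 <= knorm k.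
Proof.
  intros Hk. destruct k as [a b]. unfold knorm; cbn [fst snd].
  apply Rle_trans with (sqrt 1); [rewrite sqrt_1; lra|]. apply sqrt_le_1_alt.
  destruct (Z.eq_dec a 0) as [->|Ha].
  - destruct (Z.eq_dec b 0) as [->|Hb]; [congruence|].
    assert (1 <= IZR b ^ 2).
    { destruct (Z_lt_le_dec b 0). assert (IZR b <= -1) by (apply IZR_le; lia). nra.
      assert (1 <= IZR b) by (apply IZR_le; lia). nra. } change (IZR 0) with 0; replace (0 ^ 2) with 0 by ring; lra.
  - assert (1 <= IZR a ^ 2).
    { destruct (Z_lt_le_dec a 0). assert (IZR a <= -1) by (apply IZR_le; lia). nra.
      assert (1 <= IZR a) by (apply IZR_le; lia). nra. } pose proof (pow2_ge_0 (IZR b)); lra.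
Qed.

Lemma knorm_fst k : Rabs (IZR (fst k)) <= knorm k.
Proof. unfold knorm. apply abs_le_sqrt. nra. Qed.
Lemma knorm_snd k : Rabs (IZR (snd k)) <= knorm k.
Proof. unfold knorm. apply abs_le_sqrt. nra. Qed.

Lemma knorm_tri j l : knorm (Z2add j l) <= knorm j + knorm l.
Proof.
  destruct j as [a b], l as [c d]. unfold knorm, Z2add; simpl. rewrite !plus_IZR.
  set (A := IZR a); set (B := IZR b); set (Cc := IZR c); set (D := IZR d).
  set (sY := sqrt (A ^ 2 + B ^ 2)); set (sZ := sqrt (Cc ^ 2 + D ^ 2)).
  assert (HY : sY * sY = A ^ 2 + B ^ 2) by (apply sqrt_sqrt; nra).
  assert (HZ : sZ * sZ = Cc ^ 2 + D ^ 2) by (apply sqrt_sqrt; nra).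
  assert (H0Y : 0 <= sY) by apply sqrt_pos. assert (H0Z : 0 <= sZ) by apply sqrt_pos.
  assert (Hcs : Rabs (A * Cc + B * D) <= sY * sZ).
  { unfold sY, sZ. rewrite <- sqrt_mult by nra. apply abs_le_sqrt. pose proof (pow2_ge_0 (A*D - B*Cc)). nra. }
  pose proof (Rle_abs (A * Cc + B * D)).
  change (sqrt ((A + Cc) ^ 2 + (B + D) ^ 2) <= sY + sZ).
  rewrite <- (sqrt_Rsqr (sY + sZ)) by lra. apply sqrt_le_1_alt. unfold Rsqr. nra.
Qed.

Definition cross (j l : Z2) : R := IZR (snd j) * IZR (fst l) - IZR (fst j) * IZR (snd l).

Lemma cross_le1 j l : Rabs (cross j l) <= knorm j * knorm l.
Proof.
  destruct j as [a b], l as [c d]; unfold cross, knorm; simpl.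
  rewrite <- sqrt_mult by nra. apply abs_le_sqrt. pose proof (pow2_ge_0 (IZR a * IZR c + IZR b * IZR d)). nra.
Qed.
Lemma cross_le2 j l : Rabs (cross j l) <= knorm j * knorm (Z2add j l).
Proof.
  replace (cross j l) with (cross j (Z2add j l)).
  - apply cross_le1.
  - destruct j as [a b], l as [c d]; unfold cross, Z2add; simpl; rewrite !plus_IZR; ring.
Qed.

Lemma cross_div j l : j <> (0%Z,0%Z) ->
  Rabs (cross j l) / knorm j <= sqrt (knorm l) * sqrt (knorm (Z2add j l)).
Proof.
  intros Hj. pose proof (knorm_ge1 j Hj). pose proof (cross_le1 j l). pose proof (cross_le2 j l).
  pose proof (knorm_pos l). pose proof (knorm_pos (Z2add j l)). pose proof (Rabs_pos (cross j l)).
  rewrite <- sqrt_mult by lra. apply Rmult_le_reg_r with (knorm j); [lra|].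
  unfold Rdiv; rewrite Rmult_assoc, Rinv_l, Rmult_1_r by lra.
  replace (sqrt (knorm l * knorm (Z2add j l)) * knorm j) with (sqrt (knorm l * knorm (Z2add j l) * (knorm j * knorm j))).
  2:{ rewrite sqrt_mult by nra. rewrite sqrt_square by lra. auto. }
  apply abs_le_sqrt.
  assert (E : cross j l * cross j l = Rabs (cross j l) * Rabs (cross j l)).
  { rewrite <- Rabs_mult. rewrite Rabs_pos_eq; [auto| apply Rle_0_sqr]. }
  rewrite E.
  assert (Rabs (cross j l) * Rabs (cross j l) <= (knorm j * knorm l) * (knorm j * knorm (Z2add j l))).
  { apply Rmult_le_compat; auto. }
  nra.
Qed.

Lemma Z2dec : forall x y : Z2, {x = y} + {x <> y}.
Proof. intros [a b] [c d]. destruct (Z.eq_dec a c), (Z.eq_dec b d); subst; auto; right; congruence. Qed.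

Lemma Z2Z2dec : forall x y : Z2 * Z2, {x = y} + {x <> y}.
Proof. intros [a b] [c d]. destruct (Z2dec a c), (Z2dec b d); subst; auto; right; congruence. Qed.

Lemma exp_mono x y : x <= y -> exp x <= exp y.
Proof. intros H; destruct (Rle_lt_or_eq_dec _ _ H); [left; apply exp_increasing; auto| subst; lra]. Qed.

Lemma Rpower_pos x y : 0 < Rpower x y.
Proof. apply exp_pos. Qed.

Lemma Cmod00 : Cmod (0,0) = 0.
Proof. unfold Cmod; simpl. replace (0*(0*1) + 0*(0*1)) with 0 by ring; apply sqrt_0. Qed.

Definition hh (eh : Z2 -> Cx) k := Cmod (eh k).
Definition EE beta k := exp (beta * knorm k).
Definition PP r beta eh k := Rpower (knorm k) (r + /2) * EE beta k * hh eh k.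
Definition QQ r beta eh k := Rpower (knorm k) r * EE beta k * hh eh k.
Definition ww r k := if Z2dec k (0%Z, 0%Z) then 0 else Rpower (knorm k) (- r).

Lemma PP_nonneg r beta eh k : 0 <= PP r beta eh k.
Proof. unfold PP, EE, hh. pose proof (Rpower_pos (knorm k) (r + /2)). pose proof (exp_pos (beta * knorm k)).
  pose proof (Cmod_pos (eh k)). apply Rmult_le_pos; [|lra]. nra. Qed.
Lemma QQ_nonneg r beta eh k : 0 <= QQ r beta eh k.
Proof. unfold QQ, EE, hh. pose proof (Rpower_pos (knorm k) r). pose proof (exp_pos (beta * knorm k)).
  pose proof (Cmod_pos (eh k)). apply Rmult_le_pos; [|lra]. nra. Qed.
Lemma ww_nonneg r k : 0 <= ww r k.
Proof. unfold ww. destruct (Z2dec _ _); [lra| left; apply Rpower_pos]. Qed.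

Lemma PP_sq r beta eh k : PP r beta eh k * PP r beta eh k = norm_term r (1/2) beta eh k.
Proof.
  unfold PP, norm_term, gweight, EE, hh. rewrite <- Cmod_sq.
  replace (2 * (r + 1/2)) with ((r + /2) + (r + /2)) by field.
  replace (2 * beta * knorm k) with (beta * knorm k + beta * knorm k) by ring.
  rewrite (Rpower_plus (r + /2) (r + /2)), exp_plus. ring.
Qed.
Lemma QQ_sq r beta eh k : QQ r beta eh k * QQ r beta eh k = norm_term r 0 beta eh k.
Proof.
  unfold QQ, norm_term, gweight, EE, hh. rewrite <- Cmod_sq.
  replace (2 * (r + 0)) with (r + r) by field.
  replace (2 * beta * knorm k) with (beta * knorm k + beta * knorm k) by ring.
  rewrite Rpower_plus, exp_plus. ring.
Qed.

Lemma norm_term_mono r beta eh k : eh (0%Z,0%Z) = (0,0) ->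
  0 <= norm_term r 0 beta eh k <= norm_term r (1/2) beta eh k.
Proof.
  intros H0. rewrite <- PP_sq, <- QQ_sq. pose proof (QQ_nonneg r beta eh k). split; [nra|].
  destruct (Z2dec k (0%Z,0%Z)) as [->|Hk].
  - unfold PP, QQ, hh. rewrite H0. rewrite Cmod00. lra.
  - pose proof (knorm_ge1 k Hk).
    assert (Rpower (knorm k) r <= Rpower (knorm k) (r + /2)) by (apply Rle_Rpower; lra).
    unfold PP, QQ. pose proof (PP_nonneg r beta eh k). unfold PP in H3.
    pose proof (exp_pos (beta * knorm k)). unfold EE, hh in *. pose proof (Cmod_pos (eh k)).
    pose proof (Rpower_pos (knorm k) r).
    assert (Rpower (knorm k) r * exp (beta * knorm k) * Cmod (eh k) <= Rpower (knorm k) (r + /2) * exp (beta * knorm k) * Cmod (eh k)).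
    { apply Rmult_le_compat_r; auto. apply Rmult_le_compat_r; lra. }
    apply Rmult_le_compat; nra.
Qed.

Lemma ww_sq r k : 3/2 < r -> ww r k * ww r k <= 8 * (G (fst k) * G (snd k)).
Proof.
  intros Hr. pose proof (G_pos (fst k)). pose proof (G_pos (snd k)).
  unfold ww. destruct (Z2dec k (0%Z,0%Z)) as [_|Hk]; [nra|].
  pose proof (knorm_ge1 k Hk) as Hn. set (n := knorm k) in *.
  rewrite <- Rpower_plus.
  apply Rle_trans with (Rpower n (- INR 3)).
  { apply Rle_Rpower; auto. simpl; lra. }
  rewrite Rpower_Ropp, Rpower_pow by lra.
  unfold G. set (a := Rabs (IZR (fst k))). set (b := Rabs (IZR (snd k))).
  assert (Ha : 0 <= a) by apply Rabs_pos. assert (Hb : 0 <= b) by apply Rabs_pos.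
  assert (Han : a <= n) by apply knorm_fst. assert (Hbn : b <= n) by apply knorm_snd.
  set (p := (1 + a) * (1 + b)).
  assert (Hp : 1 <= p) by (unfold p; nra).
  assert (Hp4 : p <= 4 * (n * n)) by (unfold p; nra).
  assert (Hsp : sqrt p <= 2 * n).
  { rewrite <- (sqrt_square (2 * n)) by lra. apply sqrt_le_1_alt. lra. }
  assert (Hsp1 : 0 < sqrt p) by (apply sqrt_lt_R0; lra).
  assert (E : 8 * (/ ((1 + a) * sqrt (1 + a)) * / ((1 + b) * sqrt (1 + b))) = 8 / (p * sqrt p)).
  { unfold p. rewrite sqrt_mult by lra.
    assert (0 < sqrt (1 + a)) by (apply sqrt_lt_R0; lra). assert (0 < sqrt (1 + b)) by (apply sqrt_lt_R0; lra).
    field; repeat split; lra. }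
  rewrite E. unfold Rdiv. rewrite <- (Rinv_inv 8). rewrite <- Rinv_mult.
  apply Rinv_le_contravar. { apply Rmult_lt_0_compat; [lra|]. apply Rmult_lt_0_compat; lra. }
  assert (p * sqrt p <= 4 * (n * n) * (2 * n)) by (apply Rmult_le_compat; lra).
  simpl. nra.
Qed.

Definition Tm r beta eh (p : Z2 * Z2) : R :=
  let j := fst p in let l := snd p in let k := Z2add j l in
  (2 * PI) ^ 2 * Rpower 2 r *
  (PP r beta eh k * (QQ r beta eh j * (PP r beta eh l * ww r l) + QQ r beta eh j * ww r j * PP r beta eh l)).

Lemma Tm_nonneg r beta eh p : 0 <= Tm r beta eh p.
Proof.
  unfold Tm. pose proof PI_RGT_0. pose proof (Rpower_pos 2 r).
  pose proof (PP_nonneg r beta eh (Z2add (fst p) (snd p))). pose proof (PP_nonneg r beta eh (snd p)).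
  pose proof (QQ_nonneg r beta eh (fst p)). pose proof (ww_nonneg r (fst p)). pose proof (ww_nonneg r (snd p)).
  apply Rmult_le_pos; [apply Rmult_le_pos; [apply pow_le; lra| lra]|].
  apply Rmult_le_pos; auto. apply Rplus_le_le_0_compat; [apply Rmult_le_pos; auto; apply Rmult_le_pos; auto| apply Rmult_le_pos; [apply Rmult_le_pos|]; auto].
Qed.

Lemma nz_of_h eh k : eh (0%Z,0%Z) = (0,0) -> hh eh k <> 0 -> k <> (0%Z,0%Z).
Proof. intros H0 Hh ->. apply Hh. unfold hh. rewrite H0. apply Cmod00. Qed.

Lemma core r beta eh j l : 3/2 < r -> 0 < beta ->
  j <> (0%Z,0%Z) -> l <> (0%Z,0%Z) -> Z2add j l <> (0%Z,0%Z) ->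
  Rabs (cross j l) / knorm j * gweight r beta (Z2add j l) * (hh eh j * hh eh l * hh eh (Z2add j l))
  <= Rpower 2 r * (PP r beta eh (Z2add j l) * (QQ r beta eh j * (PP r beta eh l * ww r l) + QQ r beta eh j * ww r j * PP r beta eh l)).
Proof.
  intros Hr Hb Hj Hl Hk. set (k := Z2add j l) in *.
  pose proof (knorm_ge1 j Hj) as Hnj. pose proof (knorm_ge1 l Hl) as Hnl. pose proof (knorm_ge1 k Hk) as Hnk.
  pose proof (cross_div j l Hj) as H1. fold k in H1.
  unfold ww. destruct (Z2dec j (0%Z,0%Z)) as [|_]; [congruence|].
  destruct (Z2dec l (0%Z,0%Z)) as [|_]; [congruence|].
  unfold PP, QQ, EE, gweight.
  set (nj := knorm j) in *. set (nl := knorm l) in *. set (nk := knorm k) in *.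
  assert (Hgw : Rpower nk (2 * r) * exp (2 * beta * nk) = (Rpower nk r * exp (beta * nk)) * (Rpower nk r * exp (beta * nk))).
  { replace (2 * r) with (r + r) by ring. replace (2 * beta * nk) with (beta * nk + beta * nk) by ring.
    rewrite Rpower_plus, exp_plus. ring. }
  rewrite Hgw.
  rewrite !Rpower_plus. rewrite !Rpower_sqrt by lra. rewrite !Rpower_Ropp.
  set (Xj := Rpower nj r). set (Xl := Rpower nl r). set (Xk := Rpower nk r).
  set (Ej := exp (beta * nj)). set (El := exp (beta * nl)). set (Ek := exp (beta * nk)).
  set (hj := hh eh j). set (hl := hh eh l). set (hk := hh eh k).
  assert (HXj : 0 < Xj) by apply Rpower_pos. assert (HXl : 0 < Xl) by apply Rpower_pos.
  assert (HXk : 0 < Xk) by apply Rpower_pos.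
  assert (HEj : 0 < Ej) by apply exp_pos. assert (HEl : 0 < El) by apply exp_pos. assert (HEk : 0 < Ek) by apply exp_pos.
  assert (Hhj : 0 <= hj) by apply Cmod_pos. assert (Hhl : 0 <= hl) by apply Cmod_pos. assert (Hhk : 0 <= hk) by apply Cmod_pos.
  assert (Hsl : 0 <= sqrt nl) by apply sqrt_pos. assert (Hsk : 0 <= sqrt nk) by apply sqrt_pos.
  assert (Hc : 0 <= Rabs (cross j l) / nj) by (apply Rdiv_le_0_compat; [apply Rabs_pos| lra]).
  assert (H3 : Xk <= Rpower 2 r * (Xj + Xl)).
  { apply Rle_trans with (Rpower (nj + nl) r).
    { apply Rle_Rpower_l; [lra|]. split; [lra|]. apply knorm_tri. }
    apply Rle_trans with (Rpower (2 * Rmax nj nl) r).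
    { apply Rle_Rpower_l; [lra|]. split; [lra|]. unfold Rmax; destruct (Rle_dec nj nl); lra. }
    rewrite <- Rpower_mult_distr by (try lra; unfold Rmax; destruct (Rle_dec nj nl); lra).
    apply Rmult_le_compat_l; [left; apply Rpower_pos|].
    unfold Rmax; destruct (Rle_dec nj nl); [change (Rpower nl r) with Xl | change (Rpower nj r) with Xj]; lra. }
  assert (H4 : Ek <= Ej * El).
  { unfold Ek, Ej, El. rewrite <- exp_plus. apply exp_mono.
    pose proof (knorm_tri j l). fold k nk nj nl in H. nra. }
  assert (H5 : Xk * Ek <= Rpower 2 r * (Xj + Xl) * (Ej * El)).
  { apply Rmult_le_compat; lra. }
  assert (RHS : Rpower 2 r * (Xk * sqrt nk * Ek * hk * (Xj * Ej * hj * (Xl * sqrt nl * El * hl * / Xl)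
       + Xj * Ej * hj * / Xj * (Xl * sqrt nl * El * hl)))
     = (sqrt nl * sqrt nk * (Xk * Ek * (hj * hl * hk))) * (Rpower 2 r * (Xj + Xl) * (Ej * El))).
  { field. lra. }
  rewrite RHS.
  replace (Rabs (cross j l) / nj * (Xk * Ek * (Xk * Ek)) * (hj * hl * hk))
    with ((Rabs (cross j l) / nj) * (Xk * Ek * (hj * hl * hk)) * (Xk * Ek)) by ring.
  assert (0 <= Xk * Ek * (hj * hl * hk)) by (apply Rmult_le_pos; [nra| apply Rmult_le_pos; nra]).
  apply Rmult_le_compat; try nra.
Qed.

Lemma ip_abs_bound r beta eh p : 3/2 < r -> 0 < beta -> eh (0%Z,0%Z) = (0,0) ->
  Rabs (fst (ip_term r beta eh p)) <= Tm r beta eh p /\ Rabs (snd (ip_term r beta eh p)) <= Tm r beta eh p.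
Proof.
  intros Hr Hb H0. destruct p as [j l].
  set (k := Z2add j l).
  set (c := (2 * PI) ^ 2 * ((IZR (snd j) * IZR (fst l) - IZR (fst j) * IZR (snd l)) / knorm j) * gweight r beta k).
  set (z := Cmul (Cmul (eh j) (eh l)) (Cconj (eh k))).
  assert (Ef : fst (ip_term r beta eh (j, l)) = c * fst z) by reflexivity.
  assert (Es : snd (ip_term r beta eh (j, l)) = c * snd z) by reflexivity.
  assert (Hz : Cmod z = hh eh j * hh eh l * hh eh k).
  { unfold z, hh. rewrite !Cmod_mul, Cmod_conj. auto. }
  assert (Key : Rabs c * Cmod z <= Tm r beta eh (j, l)).
  { rewrite Hz.
    destruct (Req_dec (hh eh j) 0) as [E|Hj]; [rewrite E; apply Rle_trans with 0; [right; ring| apply Tm_nonneg]|].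
    destruct (Req_dec (hh eh l) 0) as [E|Hl]; [rewrite E; apply Rle_trans with 0; [right; ring| apply Tm_nonneg]|].
    destruct (Req_dec (hh eh k) 0) as [E|Hk]; [rewrite E; apply Rle_trans with 0; [right; ring| apply Tm_nonneg]|].
    apply nz_of_h in Hj; auto. apply nz_of_h in Hl; auto. apply nz_of_h in Hk; auto.
    pose proof (core r beta eh j l Hr Hb Hj Hl Hk) as HC.
    unfold Tm; cbn [fst snd]. fold k in HC |- *.
    pose proof (knorm_ge1 j Hj).
    assert (Hg : 0 <= gweight r beta k).
    { unfold gweight. left; apply Rmult_lt_0_compat; [apply Rpower_pos| apply exp_pos]. }
    assert (Ec : Rabs c = (2 * PI) ^ 2 * (Rabs (cross j l) / knorm j * gweight r beta k)).
    { unfold c, cross, Rdiv. rewrite !Rabs_mult, Rabs_inv.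
      rewrite (Rabs_pos_eq (knorm j)) by lra. rewrite (Rabs_pos_eq (gweight r beta k)) by auto.
      rewrite (Rabs_pos_eq ((2 * PI) ^ 2)) by (apply pow_le; pose proof PI_RGT_0; lra).
      ring. }
    rewrite Ec.
    assert (0 <= (2 * PI) ^ 2) by (apply pow_le; pose proof PI_RGT_0; lra).
    replace ((2 * PI) ^ 2 * (Rabs (cross j l) / knorm j * gweight r beta k) * (hh eh j * hh eh l * hh eh k))
      with ((2 * PI) ^ 2 * (Rabs (cross j l) / knorm j * gweight r beta k * (hh eh j * hh eh l * hh eh k))) by ring.
    rewrite (Rmult_assoc ((2 * PI) ^ 2) (Rpower 2 r)). apply Rmult_le_compat_l; auto. }
  pose proof (Rabs_pos c).
  split; [rewrite Ef | rewrite Es]; rewrite Rabs_mult; eapply Rle_trans; try exact Key;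
    apply Rmult_le_compat_l; auto; [apply fst_le_Cmod| apply snd_le_Cmod].
Qed.

Lemma amgm x y t : 0 < t -> x * y <= (t / 2) * (x * x) + (/ (2 * t)) * (y * y).
Proof.
  intros Ht. assert (E : (t / 2) * (x * x) + (/ (2 * t)) * (y * y) - x * y = (t * x - y) * (t * x - y) / (2 * t)) by (field; lra).
  assert (0 <= (t * x - y) * (t * x - y) / (2 * t)) by (apply Rdiv_le_0_compat; [apply Rle_0_sqr| lra]). lra.
Qed.

Lemma SB_mono {T} (f : T -> R) M M' : M <= M' -> SB f M -> SB f M'.
Proof. intros H HS F HF. specialize (HS F HF). lra. Qed.

Ltac inj_tac := intros [[a b] [c d]] [[a' b'] [c' d']]; unfold Z2add; cbn [fst snd]; intros Heq;
  injection Heq; intros; f_equal; f_equal; lia.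


Lemma SB_T1 (P Q w : Z2 -> R) A B W :
  (forall k, 0 <= P k) -> (forall k, 0 <= Q k) -> (forall k, 0 <= w k) ->
  0 <= A -> 0 <= B -> 0 <= W ->
  SB (fun k => P k * P k) A -> SB (fun k => Q k * Q k) B -> SB (fun k => w k * w k) W ->
  SB (fun p : Z2 * Z2 => P (Z2add (fst p) (snd p)) * Q (fst p) * P (snd p) * w (snd p))
     (sqrt (A * W) * sqrt (A * B)).
Proof.
  intros HP HQ Hw HA HB HW SP SQ Sw F HF.
  apply inf_lemma; auto; [apply sqrt_pos|]. intros t Ht.
  rewrite Rmult_comm. apply inf_lemma; auto.
  { apply Rmult_le_pos; [|lra]. assert (0 <= B / t) by (apply Rdiv_le_0_compat; lra). nra. }
  intros s Hs. rewrite Rmult_comm.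
  set (m := fun l => P l * w l).
  assert (Sm : SB m ((s / 2) * A + (/ (2 * s)) * W)).
  { apply SB_le with (fun l => (s / 2) * (P l * P l) + (/ (2 * s)) * (w l * w l)).
    { intros; apply amgm; auto. }
    apply SB_lin; auto; [lra| left; apply Rinv_0_lt_compat; lra]. }
  assert (Hm : forall l, 0 <= m l) by (intros; unfold m; apply Rmult_le_pos; auto).
  assert (S1 : SB (fun p : Z2 * Z2 => m (fst (snd p, Z2add (fst p) (snd p))) * (fun k => P k * P k) (snd (snd p, Z2add (fst p) (snd p))))
                  (((s / 2) * A + (/ (2 * s)) * W) * A)).
  { apply (SB_prod Z2dec Z2dec m (fun k => P k * P k) (fun p => (snd p, Z2add (fst p) (snd p)))); auto.
    intros; apply Rmult_le_pos; auto. inj_tac. }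
  assert (S2 : SB (fun p : Z2 * Z2 => m (fst (snd p, fst p)) * (fun k => Q k * Q k) (snd (snd p, fst p)))
                  (((s / 2) * A + (/ (2 * s)) * W) * B)).
  { apply (SB_prod Z2dec Z2dec m (fun k => Q k * Q k) (fun p => (snd p, fst p))); auto.
    intros; apply Rmult_le_pos; auto. inj_tac. }
  cbn beta in S1, S2. cbn [fst snd] in S1, S2.
  assert (S3 := SB_lin _ _ (t / 2) (/ (2 * t)) _ _ ltac:(lra) ltac:(left; apply Rinv_0_lt_compat; lra) S1 S2).
  eapply Rle_trans.
  - apply lsum_le with (g := fun p : Z2 * Z2 => t / 2 * (m (snd p) * (P (Z2add (fst p) (snd p)) * P (Z2add (fst p) (snd p))))
        + / (2 * t) * (m (snd p) * (Q (fst p) * Q (fst p)))).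
    intros p. pose proof (amgm (P (Z2add (fst p) (snd p))) (Q (fst p)) t Ht). pose proof (Hm (snd p)).
    unfold m in *. nra.
  - eapply Rle_trans; [apply S3; auto|]. right. field. lra.
Qed.

Lemma SB_T2 (P Q w : Z2 -> R) A B W :
  (forall k, 0 <= P k) -> (forall k, 0 <= Q k) -> (forall k, 0 <= w k) ->
  0 <= A -> 0 <= B -> 0 <= W ->
  SB (fun k => P k * P k) A -> SB (fun k => Q k * Q k) B -> SB (fun k => w k * w k) W ->
  SB (fun p : Z2 * Z2 => P (Z2add (fst p) (snd p)) * Q (fst p) * w (fst p) * P (snd p))
     (A * sqrt (B * W)).
Proof.
  intros HP HQ Hw HA HB HW SP SQ Sw F HF.
  apply inf_lemma; auto. intros s Hs.
  set (q := fun l => Q l * w l).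
  assert (Sq : SB q ((s / 2) * B + (/ (2 * s)) * W)).
  { apply SB_le with (fun l => (s / 2) * (Q l * Q l) + (/ (2 * s)) * (w l * w l)).
    { intros; apply amgm; auto. }
    apply SB_lin; auto; [lra| left; apply Rinv_0_lt_compat; lra]. }
  assert (Hq : forall l, 0 <= q l) by (intros; unfold q; apply Rmult_le_pos; auto).
  assert (S1 : SB (fun p : Z2 * Z2 => q (fst (fst p, Z2add (fst p) (snd p))) * (fun k => P k * P k) (snd (fst p, Z2add (fst p) (snd p))))
                  (((s / 2) * B + (/ (2 * s)) * W) * A)).
  { apply (SB_prod Z2dec Z2dec q (fun k => P k * P k) (fun p => (fst p, Z2add (fst p) (snd p)))); auto.
    intros; apply Rmult_le_pos; auto. inj_tac. }
  assert (S2 : SB (fun p : Z2 * Z2 => q (fst (fst p, snd p)) * (fun k => P k * P k) (snd (fst p, snd p)))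
                  (((s / 2) * B + (/ (2 * s)) * W) * A)).
  { apply (SB_prod Z2dec Z2dec q (fun k => P k * P k) (fun p => (fst p, snd p))); auto.
    intros; apply Rmult_le_pos; auto. inj_tac. }
  cbn beta in S1, S2. cbn [fst snd] in S1, S2.
  assert (S3 := SB_lin _ _ (1 / 2) (/ (2 * 1)) _ _ ltac:(lra) ltac:(lra) S1 S2).
  eapply Rle_trans.
  - apply lsum_le with (g := fun p : Z2 * Z2 => 1 / 2 * (q (fst p) * (P (Z2add (fst p) (snd p)) * P (Z2add (fst p) (snd p))))
        + / (2 * 1) * (q (fst p) * (P (snd p) * P (snd p)))).
    intros p. pose proof (amgm (P (Z2add (fst p) (snd p))) (P (snd p)) 1 Rlt_0_1). pose proof (Hq (fst p)).
    unfold q in *. nra.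
  - eapply Rle_trans; [apply S3; auto|]. right. field. lra.
Qed.

Lemma Cmod_le_sum z : Cmod z <= Rabs (fst z) + Rabs (snd z).
Proof.
  destruct z as [x y]; unfold Cmod; cbn [fst snd].
  pose proof (Rabs_pos x). pose proof (Rabs_pos y).
  rewrite <- (sqrt_Rsqr (Rabs x + Rabs y)) by lra. apply sqrt_le_1_alt. unfold Rsqr.
  assert (x ^ 2 = Rabs x * Rabs x) by (rewrite <- Rabs_mult; simpl; rewrite Rmult_1_r; rewrite Rabs_pos_eq; [auto| apply Rle_0_sqr]).
  assert (y ^ 2 = Rabs y * Rabs y) by (rewrite <- Rabs_mult; simpl; rewrite Rmult_1_r; rewrite Rabs_pos_eq; [auto| apply Rle_0_sqr]).
  nra.
Qed.

Theorem mainTheorem5 :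
  exists C : R, 0 < C /\
  forall (r beta : R) (eh : Z2 -> Cx) (N1 : R),
    3 / 2 < r -> 0 < beta ->
    eh (0%Z, 0%Z) = (0, 0) ->
    (* ||Lambda^{1/2} eta||_beta^2 = (2pi)^2 N1 < infinity *)
    has_sum (norm_term r (1/2) beta eh) N1 ->
    exists (N0 : R) (S : Cx),
      has_sum (norm_term r 0 beta eh) N0 /\
      has_sumC (ip_term r beta eh) S /\
      Cmod S <= C * Rpower 2 r * CW r
                 * sqrt ((2 * PI) ^ 2 * N0)
                 * ((2 * PI) ^ 2 * N1).
Proof.
  exists 100. split; [lra|].
  intros r beta eh N1 Hr Hb H0 HN1.
  assert (SN1 : SB (norm_term r (1/2) beta eh) N1).
  { apply has_sum_SB; auto. apply Z2dec. intros k; pose proof (norm_term_mono r beta eh k H0); lra. }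
  destruct (exists_sum_nonneg (norm_term r 0 beta eh) N1) as [N0 [HN0 [SN0 [HN00 _]]]].
  { intros k; pose proof (norm_term_mono r beta eh k H0); lra. }
  { apply SB_le with (norm_term r (1/2) beta eh); auto. intros k; pose proof (norm_term_mono r beta eh k H0); lra. }
  assert (HN10 : 0 <= N1) by (specialize (SN1 nil (NoDup_nil _)); exact SN1).
  assert (SP : SB (fun k => PP r beta eh k * PP r beta eh k) N1).
  { apply SB_le with (norm_term r (1/2) beta eh); auto. intros; rewrite PP_sq; lra. }
  assert (SQ : SB (fun k => QQ r beta eh k * QQ r beta eh k) N0).
  { apply SB_le with (norm_term r 0 beta eh); auto. intros; rewrite QQ_sq; lra. }
  assert (SW : SB (fun k => ww r k * ww r k) 288).
  { apply SB_le with (fun k => 8 * (G (fst k) * G (snd k))). { intros; apply ww_sq; auto. }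
    replace 288 with (8 * (6 * 6)) by ring. apply SB_scal; [lra|].
    pose proof (SB_prod Z.eq_dec Z.eq_dec G G (fun x : Z2 => x) 6 6) as HH. cbn beta in HH.
    apply HH; auto. intros; left; apply G_pos. intros; left; apply G_pos. apply SB_G. apply SB_G. }
  set (K := (2 * PI) ^ 2 * Rpower 2 r).
  assert (HK : 0 <= K) by (unfold K; apply Rmult_le_pos; [apply pow_le; pose proof PI_RGT_0; lra| left; apply Rpower_pos]).
  set (M := K * (sqrt (N1 * 288) * sqrt (N1 * N0)) + K * (N1 * sqrt (N0 * 288))).
  assert (ST : SB (Tm r beta eh) M).
  { apply SB_le with (fun p => K * (PP r beta eh (Z2add (fst p) (snd p)) * QQ r beta eh (fst p) * PP r beta eh (snd p) * ww r (snd p))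
                              + K * (PP r beta eh (Z2add (fst p) (snd p)) * QQ r beta eh (fst p) * ww r (fst p) * PP r beta eh (snd p))).
    { intros p; unfold Tm, K; right; ring. }
    apply SB_lin; auto.
    - apply SB_T1; auto using PP_nonneg, QQ_nonneg, ww_nonneg; lra.
    - apply SB_T2; auto using PP_nonneg, QQ_nonneg, ww_nonneg; lra. }
  destruct (exists_sum_abs (fun p => fst (ip_term r beta eh p)) (Tm r beta eh) M) as [S1 [HS1 HS1b]].
  { intros p; apply (ip_abs_bound r beta eh p Hr Hb H0). } { auto. }
  destruct (exists_sum_abs (fun p => snd (ip_term r beta eh p)) (Tm r beta eh) M) as [S2 [HS2 HS2b]].
  { intros p; apply (ip_abs_bound r beta eh p Hr Hb H0). } { auto. }
  exists N0, (S1, S2). split; [auto|]. split; [split; auto|].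
  eapply Rle_trans; [apply Cmod_le_sum|]. cbn [fst snd].
  assert (EM : M = 2 * K * N1 * sqrt N0 * sqrt 288).
  { unfold M. rewrite !sqrt_mult by lra.
    assert (sqrt N1 * sqrt N1 = N1) by (apply sqrt_sqrt; lra). 
    replace (K * (sqrt N1 * sqrt 288 * (sqrt N1 * sqrt N0))) with (K * (sqrt N1 * sqrt N1) * sqrt 288 * sqrt N0) by ring.
    rewrite H. ring. }
  assert (H288 : sqrt 288 <= 17).
  { rewrite <- (sqrt_square 17) by lra. apply sqrt_le_1_alt; lra. }
  assert (Hs2 : sqrt ((2 * PI) ^ 2 * N0) = 2 * PI * sqrt N0).
  { pose proof PI_RGT_0. rewrite sqrt_mult by (try apply pow_le; lra). rewrite sqrt_pow2 by lra. auto. }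
  rewrite Hs2.
  assert (HCW : 1 <= CW r * (2 * PI)).
  { unfold CW. pose proof PI_RGT_0.
    replace (/ (2 * PI) * ((2 * r - 2) / (2 * r - 3)) * (2 * PI)) with ((2 * r - 2) / (2 * r - 3)) by (field; lra).
    apply Rmult_le_reg_r with (2 * r - 3); [lra|]. unfold Rdiv. rewrite Rmult_assoc, Rinv_l by lra. lra. }
  assert (Hsn0 : 0 <= sqrt N0) by apply sqrt_pos.
  assert (Hs288 : 0 <= sqrt 288) by apply sqrt_pos.
  assert (RHS : 100 * Rpower 2 r * CW r * (2 * PI * sqrt N0) * ((2 * PI) ^ 2 * N1)
                = 100 * (CW r * (2 * PI)) * (K * N1 * sqrt N0)).
  { unfold K. ring. }
  rewrite RHS. rewrite EM in HS1b, HS2b.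
  assert (0 <= K * N1 * sqrt N0) by (apply Rmult_le_pos; [apply Rmult_le_pos|]; auto).
  assert (K * N1 * sqrt N0 * sqrt 288 <= K * N1 * sqrt N0 * 17) by (apply Rmult_le_compat_l; auto).
  assert (K * N1 * sqrt N0 * 1 <= K * N1 * sqrt N0 * (CW r * (2 * PI))) by (apply Rmult_le_compat_l; auto).
  nra.
Qed.
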